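(* Let $F=\sum_{g\ge0}\lambda^{2g-2}F_g$ be the dessin free energy (defined in the context) and define $$G_{0,2}(x_1,x_2)=\sum_{a,b\ge1} ab\,\frac{\partial^2F_0}{\partial p_a\partial p_b}\Big|_{p=0}\,x_1^{-a-1}x_2^{-b-1}.$$ Then, as formal series in $x_1^{-1},x_2^{-1}$, $$G_{0,2}(x_1,x_2)=\frac{1-\frac{s(u+v)}{x_1}-\frac{s(u+v)}{x_2}+\frac{s^2(u-v)^2}{x_1x_2}}{2(x_1-x_2)^2\sqrt{\Big(1-\frac{2s(u+v)}{x_1}+\frac{s^2(u-v)^2}{x_1^2}\Big)\Big(1-\frac{2s(u+v)}{x_2}+\frac{s^2(u-v)^2}{x_2^2}\Big)}}-\frac{1}{2(x_1-x_2)^2},$$ where the square roots are the power series in $x_i^{-1}$ with constant term $1$.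
   Context: Let $s,u,v$ be parameters and $\lambda$ a genus-tracking parameter. For $n\ge0$ define $$L_n=-\frac{n+1}{s}\frac{\partial}{\partial p_{n+1}}+(u+v)n\frac{\partial}{\partial p_n}+\sum_{j\ge1}p_j(n+j)\frac{\partial}{\partial p_{n+j}}+\lambda^2\sum_{i+j=n,\ i,j\ge1}ij\frac{\partial^2}{\partial p_i\partial p_j}+\delta_{n,0}\,uv\,\lambda^{-2}.$$ The dessin free energy $F=\sum_{g\ge0}\lambda^{2g-2}F_g$ (logarithm of the Kazarian–Zograf generating series of Grothendieck's dessins d'enfants, each $F_g$ a formal power series in $p_1,p_2,\dots$ vanishing at $p=0$) is characterized by $L_ne^F=0$ for all $n\ge0$. *)

(* Defs.v *)
From HB Require Import structures.
From mathcomp Require Import all_boot all_order all_algebra.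
Set Implicit Arguments. Unset Strict Implicit. Unset Printing Implicit Defensive.
Import GRing.Theory.
Local Open Scope ring_scope.

(* Formal power series in infinitely many variables p_1, p_2, ...          *)
(* A monomial is an exponent vector m : seq nat, with the exponent of p_i  *)
(* (i >= 1) being  nth 0 m (i-1).  Trailing zeros are irrelevant: a series *)
(* f : series R is only ever read through [coef], which first trims them.  *)

Fixpoint trim (m : seq nat) : seq nat :=
  match m with
  | [::] => [::]
  | a :: m' => let t := trim m' in
               if (a == 0%N) && (t == [::]) then [::] else a :: t
  end.

Definition series (R : Type) := seq nat -> R.

Section Series.
Variable R : comUnitRingType.

Definition coef (f : series R) (m : seq nat) : R := f (trim m).

Definition expo (m : seq nat) (i : nat) : nat := nth 0%N m i.-1.

Definition dp (i : nat) (f : series R) : series R :=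
  fun m => (expo m i).+1%:R * coef f (incr_nth m i.-1).

Definition mulp (j : nat) (f : series R) : series R :=
  fun m => if (0 < expo m j)%N then coef f (set_nth 0%N m j.-1 (expo m j).-1)
           else 0.

Fixpoint boxes (m : seq nat) : seq (seq nat) :=
  match m with
  | [::] => [:: [::]]
  | a :: m' => [seq i :: k | i <- iota 0 a.+1, k <- boxes m']
  end.

Definition subm (m k : seq nat) : seq nat := [seq (x.1 - x.2)%N | x <- zip m k].

Definition smul (f g : series R) : series R :=
  fun m => \sum_(k <- boxes m) coef f k * coef g (subm m k).

(* The constraints L_n e^F = 0, n >= 0, written genus by genus.            *)
(* With F = sum_g lambda^(2g-2) F_g, the coefficient of lambda^(2g-2) in   *)
(* e^{-F} L_n e^F, evaluated at the monomial m, is [vir_eq s u v F g n m]: *)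
Definition vir_eq (s u v : R) (F : nat -> series R) (g n : nat)
    (m : seq nat) : R :=
  - (n.+1%:R / s) * dp n.+1 (F g) m
  + (u + v) * n%:R * (if n is 0 then 0 else dp n (F g) m)
  + \sum_(1 <= j < (size m).+1) (n + j)%N%:R * mulp j (dp (n + j) (F g)) m
  + \sum_(1 <= i < n) (i * (n - i))%N%:R *
      ((if g is g'.+1 then dp i (dp (n - i) (F g')) m else 0)
       + \sum_(g1 < g.+1) smul (dp i (F g1)) (dp (n - i) (F (g - g1)%N)) m)
  + (if [&& n == 0%N, g == 0%N & trim m == [::]] then u * v else 0).

Definition dessin_free_energy (s u v : R) (F : nat -> series R) : Prop :=
  (forall g, coef (F g) [::] = 0) /\
  (forall g n m, vir_eq s u v F g n m = 0).

(* Formal power series in y1 = x1^{-1}, y2 = x2^{-1}:  b i j = coefficient *)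
(* of y1^i y2^j.                                                           *)
Definition bser := nat -> nat -> R.

Definition bmul (f g : bser) : bser :=
  fun i j => \sum_(k < i.+1) \sum_(l < j.+1) f k l * g (i - k)%N (j - l)%N.
Definition badd (f g : bser) : bser := fun i j => f i j + g i j.
Definition bopp (f : bser) : bser := fun i j => - f i j.
Definition bscale (c : R) (f : bser) : bser := fun i j => c * f i j.
Definition bconst (c : R) : bser :=
  fun i j => if (i == 0%N) && (j == 0%N) then c else 0.
Definition Y1 : bser := fun i j => if (i == 1%N) && (j == 0%N) then 1 else 0.
Definition Y2 : bser := fun i j => if (i == 0%N) && (j == 1%N) then 1 else 0.
Definition inY1 (t : nat -> R) : bser := fun i j => if j == 0%N then t i else 0.
Definition inY2 (t : nat -> R) : bser := fun i j => if i == 0%N then t j else 0.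

Definition umul (t w : nat -> R) : nat -> R :=
  fun k => \sum_(i < k.+1) t i * w (k - i)%N.

Definition Apoly (s u v : R) : nat -> R :=
  fun k => match k with
           | 0 => 1
           | 1 => - (2%:R * s * (u + v))
           | 2 => s ^+ 2 * (u - v) ^+ 2
           | _ => 0
           end.

(* G_{0,2} as a series in y1, y2:
   sum_{a,b>=1} a b (d^2 F_0 / dp_a dp_b)(0) y1^(a+1) y2^(b+1) *)
Definition G02 (F : nat -> series R) : bser :=
  fun i j => if (1 < i)%N && (1 < j)%N then
               (i.-1 * j.-1)%N%:R * dp i.-1 (dp j.-1 (F 0%N)) [::]
             else 0.

Definition Nnum (s u v : R) : bser :=
  badd (bconst 1)
   (badd (bscale (- (s * (u + v))) Y1)
   (badd (bscale (- (s * (u + v))) Y2)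
         (bscale (s ^+ 2 * (u - v) ^+ 2) (bmul Y1 Y2)))).
End Series.

(* Main.v *)
Require Import Defs.
From HB Require Import structures.
From mathcomp Require Import all_boot all_order all_algebra.
From mathcomp Require Import boolp.
From mathcomp Require Import ring.
Set Implicit Arguments. Unset Strict Implicit. Unset Printing Implicit Defensive.
Import GRing.Theory.
Local Open Scope ring_scope.

Section Conv.
Variable R : comNzRingType.
Definition S1 := nat -> R.
HB.instance Definition _ := gen_eqMixin S1.
HB.instance Definition _ := gen_choiceMixin S1.
Definition sz : S1 := fun _ => 0.
Definition sadd (a b : S1) : S1 := fun k => a k + b k.
Definition sopp (a : S1) : S1 := fun k => - a k.
Definition sone : S1 := fun k => if k == 0%N then 1 else 0.
Definition smul1 (a b : S1) : S1 := fun k => \sum_(i < k.+1) a i * b (k - i)%N.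

Fact saddA : associative sadd.
Proof. by move=> a b c; apply/funext=> k; rewrite /sadd addrA. Qed.
Fact saddC : commutative sadd.
Proof. by move=> a b; apply/funext=> k; rewrite /sadd addrC. Qed.
Fact sadd0 : left_id sz sadd.
Proof. by move=> a; apply/funext=> k; rewrite /sadd /sz add0r. Qed.
Fact saddN : left_inverse sz sopp sadd.
Proof. by move=> a; apply/funext=> k; rewrite /sadd /sopp /sz addNr. Qed.
HB.instance Definition _ := GRing.isZmodule.Build S1 saddA saddC sadd0 saddN.

Lemma smul_rev a b k : smul1 a b k = \sum_(i < k.+1) a (k - i)%N * b i.
Proof.
rewrite /smul1 -(big_mkord xpredT (fun i => a i * b (k - i)%N)) big_nat_rev /=.
rewrite big_mkord; apply: eq_bigr => i _; rewrite add0n subSS subKn //.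
by rewrite -ltnS.
Qed.

Fact smulC : commutative smul1.
Proof.
move=> a b; apply/funext=> k; rewrite smul_rev /smul1; apply: eq_bigr => i _.
by rewrite mulrC.
Qed.

Fact smulA : associative smul1.
Proof.
move=> p q r; apply/funext=> i; rewrite [RHS]smul_rev [LHS]/smul1.
pose coef3 j k := p j * (q (i - j - k)%N * r k).
transitivity (\sum_(j < i.+1) \sum_(k < i.+1 | (k <= i - j)%N) coef3 j k).
  apply: eq_bigr => /= j _; rewrite smul_rev big_distrr /=.
  by rewrite (big_ord_narrow_leq (leq_subr _ _)).
rewrite (exchange_big_dep predT) //=; apply: eq_bigr => k _.
transitivity (\sum_(j < i.+1 | (j <= i - k)%N) coef3 j k).
  apply: eq_bigl => j; rewrite -ltnS -(ltnS j) -!subSn ?leq_ord //.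
  by rewrite -subn_gt0 -(subn_gt0 j) -!subnDA addnC.
rewrite (big_ord_narrow_leq (leq_subr _ _)) /smul1 big_distrl /=.
by apply: eq_bigr => j _; rewrite /coef3 -!subnDA addnC mulrA.
Qed.

Fact smul1r : left_id sone smul1.
Proof.
move=> a; apply/funext=> k; rewrite /smul1 big_ord_recl /= /sone eqxx mul1r subn0.
by rewrite big1 ?addr0 // => i _; rewrite mul0r.
Qed.

Fact smulDl : left_distributive smul1 sadd.
Proof.
move=> a b c; apply/funext=> k; rewrite /smul1 /sadd -big_split /=.
by apply: eq_bigr => i _; rewrite mulrDl.
Qed.

Fact sone_neq0 : sone != sz.
Proof.
apply/eqP=> /(congr1 (fun f => f 0%N)); rewrite /sone /sz /= => /eqP.
by rewrite oner_eq0.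
Qed.

HB.instance Definition _ := GRing.Zmodule_isComNzRing.Build S1 smulA smulC smul1r smulDl sone_neq0.

Lemma sDE (a b : S1) k : (a + b) k = a k + b k. Proof. by []. Qed.
Lemma sNE (a : S1) k : (- a) k = - a k. Proof. by []. Qed.
Lemma sBE (a b : S1) k : (a - b) k = a k - b k. Proof. by []. Qed.
Lemma sME (a b : S1) k : (a * b) k = \sum_(i < k.+1) a i * b (k - i)%N. Proof. by []. Qed.
Lemma s1E k : (1 : S1) k = if k == 0%N then 1 else 0. Proof. by []. Qed.
Lemma s0E k : (0 : S1) k = 0. Proof. by []. Qed.
Definition scst (c : R) : S1 := fun k => if k == 0%N then c else 0.
Fact scst_add : zmod_morphism scst.
Proof.
move=> a b; apply/funext=> k /=.
rewrite sBE /scst; case: (k == 0%N); rewrite ?subr0 //.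
Qed.
HB.instance Definition _ := GRing.isZmodMorphism.Build R S1 scst scst_add.
Fact scst_mul : multiplicative scst.
Proof.
split=> [a b|]; last by [].
apply/funext=> k; rewrite sME /scst.
case: k => [|k]; first by rewrite big_ord_recl big_ord0 addr0.
rewrite big1 // => i _; case: (nat_of_ord i) => [|j] /=; last by rewrite mul0r.
by rewrite mulr0.
Qed.
HB.instance Definition _ := GRing.isMultiplicative.Build R S1 scst scst_mul.

Lemma scstM (a : R) (Y : S1) k : (scst a * Y) k = a * Y k.
Proof.
rewrite sME big_ord_recl /scst /= subn0 big1 ?addr0 // => i _.
by rewrite mul0r.
Qed.

Lemma evsum (I : Type) (r : seq I) (P : pred I) (G : I -> S1) k :
  (\sum_(i <- r | P i) G i) k = \sum_(i <- r | P i) G i k.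
Proof. exact: (big_morph (fun f : S1 => f k) (fun a b => sDE a b k) (s0E k)). Qed.
End Conv.

Lemma lc1 (V : comNzRingType) (x y a1 b1 k1 : V) :
  a1 = b1 -> x - y = k1 * (a1 - b1) -> x = y.
Proof. by move=> -> /eqP; rewrite subrr mulr0 subr_eq0 => /eqP. Qed.
Lemma lc2 (V : comNzRingType) (x y a1 b1 k1 a2 b2 k2 : V) :
  a1 = b1 -> a2 = b2 -> x - y = k1 * (a1 - b1) + k2 * (a2 - b2) -> x = y.
Proof. by move=> -> -> /eqP; rewrite !subrr !mulr0 addr0 subr_eq0 => /eqP. Qed.
Lemma lc3 (V : comNzRingType) (x y a1 b1 k1 a2 b2 k2 a3 b3 k3 : V) :
  a1 = b1 -> a2 = b2 -> a3 = b3 ->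
  x - y = k1 * (a1 - b1) + k2 * (a2 - b2) + k3 * (a3 - b3) -> x = y.
Proof. by move=> -> -> -> /eqP; rewrite !subrr !mulr0 !addr0 subr_eq0 => /eqP. Qed.
Lemma lc5 (V : comNzRingType) (x y a1 b1 k1 a2 b2 k2 a3 b3 k3 a4 b4 k4 a5 b5 k5 : V) :
  a1 = b1 -> a2 = b2 -> a3 = b3 -> a4 = b4 -> a5 = b5 ->
  x - y = k1 * (a1 - b1) + k2 * (a2 - b2) + k3 * (a3 - b3) + k4 * (a4 - b4)
          + k5 * (a5 - b5) -> x = y.
Proof. by move=> -> -> -> -> -> /eqP; rewrite !subrr !mulr0 !addr0 subr_eq0 => /eqP. Qed.


Notation B R := (S1 (S1 R)).
Definition C (R : fieldType) (c : R) : B R := scst (scst c).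

Lemma bmulE (R : fieldType) (f g : bser R) : bmul f g = (f : B R) * g.
Proof.
apply/funext=> i; apply/funext=> j; rewrite /bmul sME evsum.
by apply: eq_bigr => k _; rewrite sME.
Qed.
Lemma baddE (R : fieldType) (f g : bser R) : badd f g = (f : B R) + g.
Proof. by []. Qed.
Lemma boppE (R : fieldType) (f : bser R) : bopp f = - (f : B R).
Proof. by []. Qed.
Lemma CE (R : fieldType) (c : R) i j : C c i j = if (i == 0%N) && (j == 0%N) then c else 0.
Proof. by case: i => [|i] //; case: j. Qed.
Lemma mulCE (R : fieldType) (c : R) (X : B R) i j : (C c * X) i j = c * X i j.
Proof. by rewrite /C scstM scstM. Qed.
Lemma oneE (R : fieldType) i j : (1 : B R) i j = if (i == 0%N) && (j == 0%N) then 1 else 0.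
Proof. by case: i => [|i] //; case: j. Qed.
Lemma bconstE (R : fieldType) (c : R) : bconst c = C c.
Proof. by apply/funext=> i; apply/funext=> j; rewrite CE. Qed.
Lemma bscaleE (R : fieldType) (c : R) (f : bser R) : bscale c f = C c * (f : B R).
Proof. by apply/funext=> i; apply/funext=> j; rewrite mulCE. Qed.

Lemma mulinY1 (R : fieldType) (a : nat -> R) (X : B R) i j :
  ((inY1 a : B R) * X) i j = \sum_(k < i.+1) a k * X (i - k)%N j.
Proof.
rewrite -bmulE /bmul; apply: eq_bigr => k _.
rewrite big_ord_recl /inY1 /= subn0 big1 ?addr0 // => l _; by rewrite mul0r.
Qed.
Lemma mulinY2 (R : fieldType) (a : nat -> R) (X : B R) i j :
  ((inY2 a : B R) * X) i j = \sum_(l < j.+1) a l * X i (j - l)%N.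
Proof.
rewrite -bmulE /bmul big_ord_recl /inY2 /= subn0.
rewrite [X in _ + X]big1 ?addr0 // => k _; by rewrite big1 // => l _; rewrite mul0r.
Qed.

Lemma sum_d1 (R : fieldType) (G : nat -> R) i :
  \sum_(k < i.+1) (if nat_of_ord k == 1%N then 1 else 0) * G k = if i is _.+1 then G 1%N else 0.
Proof.
case: i => [|i]; first by rewrite big_ord1 mul0r.
rewrite big_ord_recl big_ord_recl /= mul0r mul1r add0r big1 ?addr0 // => k _.
by rewrite mul0r.
Qed.

Lemma Y1E (R : fieldType) : Y1 R = inY1 (fun k => if k == 1%N then 1 else 0).
Proof. by apply/funext=> i; apply/funext=> j; rewrite /Y1 /inY1; case: j => [|j]; case: i => [|[|i]]. Qed.
Lemma Y2E (R : fieldType) : Y2 R = inY2 (fun k => if k == 1%N then 1 else 0).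
Proof. by apply/funext=> i; apply/funext=> j; rewrite /Y2 /inY2; case: i => [|i]; case: j => [|[|j]]. Qed.

Lemma mulY1E (R : fieldType) (X : B R) i j :
  ((Y1 R : B R) * X) i j = if i is i'.+1 then X i' j else 0.
Proof.
rewrite Y1E mulinY1 (sum_d1 (fun k => X (i - k)%N j)).
by case: i => // i; rewrite subSS subn0.
Qed.
Lemma mulY2E (R : fieldType) (X : B R) i j :
  ((Y2 R : B R) * X) i j = if j is j'.+1 then X i j' else 0.
Proof.
rewrite Y2E mulinY2 (sum_d1 (fun k => X i (j - k)%N)).
by case: j => // j; rewrite subSS subn0.
Qed.

Lemma inY1M (R : fieldType) (a b : nat -> R) : inY1 (umul a b) = (inY1 a : B R) * inY1 b.
Proof.
apply/funext=> i; apply/funext=> j; rewrite mulinY1 /inY1 /umul.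
case: (j == 0%N) => //; by rewrite big1 // => k _; rewrite mulr0.
Qed.
Lemma inY2M (R : fieldType) (a b : nat -> R) : inY2 (umul a b) = (inY2 a : B R) * inY2 b.
Proof.
apply/funext=> i; apply/funext=> j; rewrite mulinY2 /inY2 /umul.
case: (i == 0%N) => //; by rewrite big1 // => k _; rewrite mulr0.
Qed.


Lemma trim_nseq k : trim (nseq k 0%N) = [::].
Proof. by elim: k => //= k ->. Qed.
Lemma trim_e k : trim (incr_nth [::] k) = incr_nth [::] k.
Proof.
have E : incr_nth [::] k = ncons k 0%N [:: 1%N] by case: k.
rewrite E; elim: k {E} => //= k ->; by case: k.
Qed.
Lemma coef_nseq (R : fieldType) (f : series R) k : coef f (nseq k 0%N) = f [::].
Proof. by rewrite /coef trim_nseq. Qed.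
Lemma coef_e (R : fieldType) (f : series R) k : coef f (incr_nth [::] k) = f (incr_nth [::] k).
Proof. by rewrite /coef trim_e. Qed.

Lemma vir0 (R : fieldType) (s u v : R) F n : vir_eq s u v F 0 n [::] =
  -(n.+1%:R / s) * dp n.+1 (F 0%N) [::] + (u+v) * n%:R * (if n is 0 then 0 else dp n (F 0%N) [::])
  + \sum_(1 <= i < n) (i*(n-i))%N%:R * (dp i (F 0%N) [::] * dp (n-i) (F 0%N) [::])
  + (if n == 0%N then u*v else 0).
Proof.
rewrite /vir_eq big_geq // addr0; congr (_ + _ + _); last first.
  by case: (n == 0%N).
apply: eq_bigr => i _; rewrite add0r big_ord1 subnn.
by rewrite /smul /= big_seq1.
Qed.

Lemma incr_nilE k : incr_nth [::] k = ncons k 0%N [:: 1%N].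
Proof. by case: k. Qed.

Lemma boxes_e b : boxes (incr_nth [::] b) = [:: nseq b.+1 0%N; incr_nth [::] b].
Proof. by rewrite !incr_nilE; elim: b => //= b ->. Qed.

Lemma subm_0 m : subm m (nseq (size m) 0%N) = m.
Proof. by elim: m => //= a m; rewrite /subm /= subn0 => ->. Qed.
Lemma subm_id m : subm m m = nseq (size m) 0%N.
Proof. by elim: m => //= a m; rewrite /subm /= subnn => ->. Qed.

Lemma set_nth_e b : set_nth 0%N (incr_nth [::] b) b 0%N = nseq b.+1 0%N.
Proof. by rewrite incr_nilE; elim: b => //= b ->. Qed.

Lemma smul_e (R : fieldType) (X Y : series R) b :
  smul X Y (incr_nth [::] b) = X [::] * Y (incr_nth [::] b) + X (incr_nth [::] b) * Y [::].
Proof.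
rewrite /smul boxes_e big_cons big_seq1.
have Hs : size (incr_nth [::] b) = b.+1 by rewrite size_incr_nth.
by rewrite -{2}Hs subm_0 subm_id Hs !coef_nseq !coef_e.
Qed.

Lemma dpe (R : fieldType) (F : nat -> series R) a b :
  dp a.+1 (F 0%N) (incr_nth [::] b) = dp a.+1 (dp b.+1 (F 0%N)) [::].
Proof.
rewrite /dp /expo /= !nth_incr_nth /= incr_nthC /coef trim_e.
by rewrite nth_incr_nth !nth_nil eq_sym mul1r.
Qed.

Lemma vir1 (R : fieldType) (s u v : R) F n b : vir_eq s u v F 0 n (incr_nth [::] b) =
  -(n.+1%:R / s) * dp n.+1 (dp b.+1 (F 0%N)) [::]
  + (u+v) * n%:R * (if n is 0 then 0 else dp n (dp b.+1 (F 0%N)) [::])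
  + (n + b.+1)%N%:R * dp (n + b.+1) (F 0%N) [::]
  + \sum_(1 <= i < n) (i*(n-i))%N%:R * (dp i (F 0%N) [::] * dp (n-i) (dp b.+1 (F 0%N)) [::]
                                      + dp i (dp b.+1 (F 0%N)) [::] * dp (n-i) (F 0%N) [::]).
Proof.
have Htr : trim (incr_nth [::] b) == [::] = false by rewrite trim_e incr_nilE; case: b.
rewrite /vir_eq Htr !andbF addr0 dpe; congr (_ + _ + _ + _).
- by case: n => // n; rewrite dpe.
- rewrite size_incr_nth /= big_nat_recr //= big1_seq ?add0r; last first.
    move=> j /andP[_]; rewrite mem_index_iota => /andP[hj1 hj2].
    rewrite /mulp /expo nth_incr_nth nth_nil addn0.
    case: j hj1 hj2 => // j _ hj; rewrite ltnS in hj; rewrite /= (gtn_eqF hj) /=.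
    by rewrite mulr0.
  rewrite /mulp /expo nth_incr_nth eqxx nth_nil /= set_nth_e coef_nseq.
  by rewrite addnS.
- apply: eq_big_nat => i /andP[hi1 hi2].
  rewrite add0r big_ord1 subnn smul_e.
  case: i hi1 hi2 => // i _ hi.
  have [k hk] : exists k, (n - i.+1)%N = k.+1.
    by exists (n - i.+1).-1; rewrite prednK // subn_gt0.
  by rewrite hk !dpe.
Qed.

Definition gg (R : fieldType) (F : nat -> series R) a : R := a%:R * dp a (F 0%N) [::].
Definition HH (R : fieldType) (F : nat -> series R) : B R :=
  fun a b => (a*b)%N%:R * dp a (dp b (F 0%N)) [::].
Definition KK (R : fieldType) (F : nat -> series R) : B R := fun n b => b%:R * gg F (n+b).
Definition MM (R : fieldType) (F : nat -> series R) : B R :=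
  fun i j => if i is i'.+1 then if j is j'.+1 then gg F (i'+j').+1 else 0 else 0.
Definition EE (R : fieldType) (F : nat -> series R) : nat -> R := fun k => k%:R * gg F k.
Definition dT (R : fieldType) (T : nat -> R) : nat -> R := fun k => k.+1%:R * T k.+1.

Lemma gg0 (R : fieldType) (F : nat -> series R) : gg F 0 = 0.
Proof. by rewrite /gg mul0r. Qed.

Lemma sum_trim (R : fieldType) (G : nat -> R) n : G 0%N = 0 -> G n = 0 ->
  \sum_(i < n.+1) G i = \sum_(1 <= i < n) G i.
Proof.
move=> h0 hn; rewrite -(big_mkord xpredT).
case: n hn => [|n] hn; first by rewrite big_nat1 h0 big_geq.
by rewrite big_nat_recr //= hn addr0 big_ltn // h0 add0r.
Qed.

Lemma V0 (R : fieldType) (s u v : R) F (hs : s != 0)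
  (h : forall n, vir_eq s u v F 0 n [::] = 0) n :
  gg F n.+1 = s * ((u+v) * gg F n + \sum_(i < n.+1) gg F i * gg F (n-i)%N
                   + (if n == 0%N then u*v else 0)).
Proof.
have E := h n; rewrite vir0 in E.
have Hmid : (u+v) * n%:R * (if n is 0 then 0 else dp n (F 0%N) [::]) = (u+v) * gg F n.
  by case: n {E} => [|n]; rewrite /gg; ring.
have Hsum : \sum_(1 <= i < n) (i*(n-i))%N%:R * (dp i (F 0%N) [::] * dp (n-i) (F 0%N) [::])
   = \sum_(i < n.+1) gg F i * gg F (n-i)%N.
  rewrite (@sum_trim _ (fun i => gg F i * gg F (n - i)%N)); last 2 first.
  - by rewrite gg0 mul0r.
  - by rewrite subnn gg0 mulr0.
  by apply: eq_bigr => i _; rewrite /gg natrM; ring.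
rewrite Hmid Hsum in E.
apply: (lc1 (k1 := - s) E); rewrite /gg; field.
exact: hs.
Qed.

Lemma V1 (R : fieldType) (s u v : R) F (hs : s != 0)
  (h : forall n m, vir_eq s u v F 0 n m = 0) n b :
  HH F n.+1 b.+1 = s * ((u+v) * HH F n b.+1 + KK F n b.+1
                        + 2%:R * \sum_(i < n.+1) gg F i * HH F (n-i)%N b.+1).
Proof.
have E := h n (incr_nth [::] b); rewrite vir1 in E.
have Hmid : (u+v) * n%:R * (if n is 0 then 0 else dp n (dp b.+1 (F 0%N)) [::])
   = (u+v) * n%:R * dp n (dp b.+1 (F 0%N)) [::].
  by case: n {E} => [|n] //; ring.
set Sf := \sum_(1 <= i < n) (i*(n-i))%N%:R *
            (dp i (F 0%N) [::] * dp (n - i)%N (dp b.+1 (F 0%N)) [::]).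
have Hsum : \sum_(1 <= i < n) (i*(n-i))%N%:R *
     (dp i (F 0%N) [::] * dp (n - i)%N (dp b.+1 (F 0%N)) [::]
      + dp i (dp b.+1 (F 0%N)) [::] * dp (n - i)%N (F 0%N) [::])
   = 2%:R * Sf.
  rewrite (eq_bigr (fun i => (i*(n-i))%N%:R *
             (dp i (F 0%N) [::] * dp (n - i)%N (dp b.+1 (F 0%N)) [::])
           + (i*(n-i))%N%:R *
             (dp i (dp b.+1 (F 0%N)) [::] * dp (n - i)%N (F 0%N) [::]))); last first.
    by move=> i _; rewrite mulrDr.
  rewrite big_split /= -/Sf mulr2n mulrDl mul1r; congr (_ + _).
  rewrite big_nat_rev /=; apply: eq_big_nat => i /andP[h1 h2].
  rewrite add1n subSS subKn ?(ltnW h2) // mulnC; ring.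
have Hs2 : Sf * b.+1%:R = \sum_(i < n.+1) gg F i * HH F (n-i)%N b.+1.
  rewrite (@sum_trim _ (fun i => gg F i * HH F (n - i)%N b.+1)); last 2 first.
  - by rewrite gg0 mul0r.
  - by rewrite subnn /HH mul0n mul0r mulr0.
  rewrite /Sf mulr_suml; apply: eq_bigr => i _; rewrite /gg /HH !natrM; ring.
rewrite Hmid Hsum in E; rewrite -Hs2.
apply: (lc1 (k1 := - (s * b.+1%:R)) E); rewrite /HH /KK /gg !natrM.
field; exact: hs.
Qed.

Lemma Qeq (R : fieldType) (s u v : R) F (hs : s != 0)
  (h : forall n, vir_eq s u v F 0 n [::] = 0) :
  (inY1 (gg F) : B R) = C s * (C (u+v) * ((Y1 R : B R) * inY1 (gg F))
     + (Y1 R : B R) * ((inY1 (gg F) : B R) * inY1 (gg F)) + C (u*v) * (Y1 R : B R)).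
Proof.
apply/funext=> i; apply/funext=> j.
rewrite !(sDE, mulCE, mulY1E) -inY1M.
case: j => [|j]; case: i => [|i]; rewrite /inY1 /Y1 /= ?gg0 ?andbT ?andbF; try ring.
rewrite (V0 hs h) /umul eqSS; case: (i == 0%N); ring.
Qed.

Definition tt (R : fieldType) (s u v : R) (F : nat -> series R) : nat -> R :=
  fun k => (if k == 0%N then 1 else 0) - (if k == 1%N then s * (u+v) else 0)
           - 2%:R * s * (if k is k'.+1 then gg F k' else 0).

Lemma inY1_tt (R : fieldType) (s u v : R) F :
  (inY1 (tt s u v F) : B R) = 1 - C (s * (u+v)) * (Y1 R : B R)
     - C (2%:R * s) * ((Y1 R : B R) * inY1 (gg F)).
Proof.
apply/funext=> i; apply/funext=> j.
rewrite !(sDE, sBE, sNE, mulCE, mulY1E, oneE).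
case: j => [|j]; case: i => [|[|i]]; rewrite /inY1 /Y1 /tt /= ?gg0 ?andbT ?andbF; ring.
Qed.

Lemma inY2_tt (R : fieldType) (s u v : R) F :
  (inY2 (tt s u v F) : B R) = 1 - C (s * (u+v)) * (Y2 R : B R)
     - C (2%:R * s) * ((Y2 R : B R) * inY2 (gg F)).
Proof.
apply/funext=> i; apply/funext=> j.
rewrite !(sDE, sBE, sNE, mulCE, mulY2E, oneE).
case: i => [|i]; case: j => [|[|j]]; rewrite /inY2 /Y2 /tt /= ?gg0 ?andbT ?andbF; ring.
Qed.

Lemma inY1_A (R : fieldType) (s u v : R) :
  (inY1 (Apoly s u v) : B R) = 1 - C (2%:R * s * (u+v)) * (Y1 R : B R)
     + C (s ^+ 2 * (u - v) ^+ 2) * ((Y1 R : B R) * Y1 R).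
Proof.
apply/funext=> i; apply/funext=> j.
rewrite !(sDE, sBE, sNE, mulCE, mulY1E, oneE).
case: j => [|j]; case: i => [|[|[|i]]]; rewrite /inY1 /Y1 /Apoly /= ?andbT ?andbF; ring.
Qed.

Lemma inY2_A (R : fieldType) (s u v : R) :
  (inY2 (Apoly s u v) : B R) = 1 - C (2%:R * s * (u+v)) * (Y2 R : B R)
     + C (s ^+ 2 * (u - v) ^+ 2) * ((Y2 R : B R) * Y2 R).
Proof.
apply/funext=> i; apply/funext=> j.
rewrite !(sDE, sBE, sNE, mulCE, mulY2E, oneE).
case: i => [|i]; case: j => [|[|[|j]]]; rewrite /inY2 /Y2 /Apoly /= ?andbT ?andbF; ring.
Qed.

Lemma tt_sq (R : fieldType) (s u v : R) F (hs : s != 0)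
  (h : forall n, vir_eq s u v F 0 n [::] = 0) k :
  umul (tt s u v F) (tt s u v F) k = Apoly s u v k.
Proof.
have E : (inY1 (umul (tt s u v F) (tt s u v F)) : B R) = inY1 (Apoly s u v).
  rewrite inY1M inY1_tt inY1_A.
  apply: (lc1 (k1 := - C (4%:R * s) * (Y1 R : B R)) (Qeq hs h)); ring.
by have := congr1 (fun X : B R => X k 0%N) E; rewrite /inY1.
Qed.

Lemma two_neq0 (R : fieldType) (hR : [pchar R] =i pred0) : (2%:R : R) != 0.
Proof.
by have := hR 2%N; rewrite !inE /= => ->.
Qed.

Lemma sqrt_uniq (R : fieldType) (hR : [pchar R] =i pred0) (a b : nat -> R) :
  a 0%N = 1 -> b 0%N = 1 -> (forall k, umul a a k = umul b b k) -> forall k, a k = b k.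
Proof.
move=> ha hb H k; elim/ltn_ind: k => -[|k] IH; first by rewrite ha hb.
have := H k.+1; rewrite /umul.
rewrite -(big_mkord xpredT (fun i => a i * a (k.+1 - i)%N)).
rewrite -(big_mkord xpredT (fun i => b i * b (k.+1 - i)%N)).
rewrite big_nat_recr // [in RHS]big_nat_recr //= big_ltn // [in RHS]big_ltn // !subn0 !subnn ha hb.
rewrite (@eq_big_nat _ _ _ 1 k.+1 _ (fun i => b i * b (k.+1 - i)%N)); last first.
  move=> i /andP[h1 h2]; by rewrite !IH // ltn_subrL h1.
move=> E.
have E2 : 2%:R * a k.+1 = 2%:R * b k.+1.
  apply: (lc1 (k1 := 1) E); ring.
by move: E2 => /(mulfI (two_neq0 hR)).
Qed.

Lemma e2eq (R : fieldType) (s u v : R) F (hs : s != 0)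
  (h : forall n m, vir_eq s u v F 0 n m = 0) :
  HH F = C s * (C (u+v) * ((Y1 R : B R) * HH F) + (Y1 R : B R) * KK F
                + C 2%:R * ((Y1 R : B R) * ((inY1 (gg F) : B R) * HH F))).
Proof.
apply/funext=> i; apply/funext=> j.
rewrite !(sDE, mulCE, mulY1E).
case: i => [|i]; first by rewrite /HH mul0n; ring.
rewrite mulinY1; case: j => [|j]; last exact: (V1 hs h).
rewrite /HH /KK !muln0 big1 ?mul0r; first ring.
by move=> k _; rewrite muln0 mul0r mulr0.
Qed.

Lemma e3eq (R : fieldType) (F : nat -> series R) :
  (Y1 R : B R) * KK F - (Y2 R : B R) * KK F = MM F - (Y2 R : B R) * inY2 (EE F).
Proof.
apply/funext=> i; apply/funext=> j.
rewrite !(sBE, mulY1E, mulY2E).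
case: i => [|i]; case: j => [|j]; rewrite /KK /MM /inY2 /EE /= ?add0n; try ring.
by rewrite addnS addSn; ring.
Qed.

Lemma e4eq (R : fieldType) (F : nat -> series R) :
  (Y1 R : B R) * MM F - (Y2 R : B R) * MM F
  = (Y1 R : B R) * ((Y2 R : B R) * ((inY1 (gg F) : B R) - (inY2 (gg F) : B R))).
Proof.
apply/funext=> i; apply/funext=> j.
case: i => [|[|i]]; case: j => [|[|j]];
  rewrite !(sBE, mulY1E, mulY2E) /MM /inY1 /inY2 /= ?gg0 ?addn0 ?add0n; try ring.
by rewrite addnS addSn; ring.
Qed.

Lemma Geq (R : fieldType) (F : nat -> series R) :
  G02 F = (Y1 R : B R) * ((Y2 R : B R) * HH F).
Proof.
apply/funext=> i; apply/funext=> j.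
by case: i => [|[|i]]; case: j => [|[|j]];
  rewrite !(mulY1E, mulY2E) /G02 /HH /= ?mul0n ?muln0 ?mul0r.
Qed.

Lemma deriv_sq (R : fieldType) (a : nat -> R) k :
  2%:R * umul a (dT a) k = k.+1%:R * umul a a k.+1.
Proof.
rewrite /umul -(big_mkord xpredT (fun i => a i * dT a (k - i)%N)).
rewrite -(big_mkord xpredT (fun i => a i * a (k.+1 - i)%N)).
have R1 : \sum_(0 <= i < k.+1) a i * dT a (k - i)%N
        = \sum_(0 <= i < k.+2) (k.+1 - i)%N%:R * (a i * a (k.+1 - i)%N).
  rewrite [RHS]big_nat_recr //= subnn mul0r addr0.
  apply: eq_big_nat => i /andP[_ hi]; rewrite /dT subSn; last by rewrite -ltnS.
  ring.
have R2 : \sum_(0 <= i < k.+2) (k.+1 - i)%N%:R * (a i * a (k.+1 - i)%N)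
        = \sum_(0 <= i < k.+2) i%:R * (a i * a (k.+1 - i)%N).
  rewrite big_nat_rev /=; apply: eq_big_nat => i /andP[_ hi].
  rewrite add0n subSS subKn; last by rewrite -ltnS.
  ring.
rewrite mulr2n mulrDl mul1r {1}R1 R2 R1 -big_split /= mulr_sumr.
apply: eq_big_nat => i /andP[_ hi]; rewrite -mulrDl -natrD subnKC //; by rewrite -ltnS.
Qed.

Lemma e5eq (R : fieldType) (s u v : R) F (T : nat -> R) (TE : T = tt s u v F) :
  C (2%:R * s) * ((inY2 (gg F) : B R) + inY2 (EE F)) = - C (s * (u+v)) - (inY2 (dT T) : B R).
Proof.
apply/funext=> i; apply/funext=> j.
rewrite !(sDE, sBE, sNE, mulCE, CE).
case: i => [|i]; rewrite /inY2 /EE /dT /= ?TE /tt /=; last ring.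
case: j => [|j] /=; rewrite ?gg0; ring.
Qed.

Lemma e6eq (R : fieldType) (hR : [pchar R] =i pred0) (s u v : R) (T : nat -> R)
  (hT : forall k, umul T T k = Apoly s u v k) :
  (inY2 T : B R) * inY2 (dT T) = - C (s * (u+v)) + C (s ^+ 2 * (u - v) ^+ 2) * (Y2 R : B R).
Proof.
apply/funext=> i; apply/funext=> j.
rewrite -inY2M !(sDE, sNE, mulCE, mulY2E, CE).
have h2 := two_neq0 hR.
case: i => [|i]; rewrite /inY2 /Y2 /=; last ring.
have E := deriv_sq T j; rewrite hT in E.
have E' : umul T (dT T) j = j.+1%:R * Apoly s u v j.+1 / 2%:R.
  by rewrite -E; field.
rewrite E'; case: j {E E'} => [|[|j]] /=; rewrite /Apoly /=; by field.
Qed.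

Lemma lc8 (V : comNzRingType) (x y a1 b1 k1 a2 b2 k2 a3 b3 k3 a4 b4 k4 a5 b5 k5
   a6 b6 k6 a7 b7 k7 a8 b8 k8 : V) :
  a1 = b1 -> a2 = b2 -> a3 = b3 -> a4 = b4 -> a5 = b5 -> a6 = b6 -> a7 = b7 -> a8 = b8 ->
  x - y = k1 * (a1 - b1) + k2 * (a2 - b2) + k3 * (a3 - b3) + k4 * (a4 - b4)
          + k5 * (a5 - b5) + k6 * (a6 - b6) + k7 * (a7 - b7) + k8 * (a8 - b8) -> x = y.
Proof.
by move=> -> -> -> -> -> -> -> -> /eqP; rewrite !subrr !mulr0 !addr0 subr_eq0 => /eqP.
Qed.

Unset Implicit Arguments.
Theorem proposition3p1 (R : fieldType) (hR : [pchar R] =i pred0)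
    (s u v : R) (hs : s != 0) (F : nat -> series R)
    (hF : dessin_free_energy s u v F)
    (T : nat -> R) (hT0 : T 0%N = 1) (hT : forall k, umul T T k = Apoly s u v k) :
  forall i j : nat,
    bscale 2%:R
      (bmul (bmul (badd (Y1 R) (bopp (Y2 R))) (badd (Y1 R) (bopp (Y2 R))))
            (bmul (G02 F) (bmul (inY1 T) (inY2 T)))) i j
    = bmul (bmul (bmul (Y1 R) (Y1 R)) (bmul (Y2 R) (Y2 R)))
           (badd (Nnum s u v) (bopp (bmul (inY1 T) (inY2 T)))) i j.
Proof.
move=> i j; apply: (congr1 (fun Z : bser R => Z i j)).
case: hF => _ hvir.
have h0 : forall n, vir_eq s u v F 0 n [::] = 0 by move=> n; exact: hvir.
have tt0 : tt s u v F 0 = 1 by rewrite /tt /=; ring.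
have TE : T = tt s u v F.
  apply/funext; apply: (sqrt_uniq hR hT0 tt0) => k.
  by rewrite hT (tt_sq hs h0).
have k1 : (inY1 T : B R) = 1 - C (s * (u+v)) * (Y1 R : B R)
     - C (2%:R * s) * ((Y1 R : B R) * inY1 (gg F)) by rewrite TE inY1_tt.
have k2 : (inY2 T : B R) = 1 - C (s * (u+v)) * (Y2 R : B R)
     - C (2%:R * s) * ((Y2 R : B R) * inY2 (gg F)) by rewrite TE inY2_tt.
have e5 := e5eq TE.
have e6 := e6eq hR hT.
have e7 : (inY2 T : B R) * inY2 T = 1 - C (2%:R * s * (u+v)) * (Y2 R : B R)
     + C (s ^+ 2 * (u - v) ^+ 2) * ((Y2 R : B R) * Y2 R).
  by rewrite -inY2M -inY2_A; congr inY2; apply/funext.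
have e2 : HH F * (inY1 T : B R) = C s * ((Y1 R : B R) * KK F).
  rewrite k1; apply: (lc1 (k1 := (1 : B R)) (e2eq hs (hvir 0%N))); ring.
have e3 := e3eq F.
have e4 := e4eq F.
rewrite !bmulE bscaleE /Nnum !baddE !boppE !bscaleE bconstE !bmulE Geq -/(1 : B R).
apply: (lc8 (k1 := C 2%:R * ((Y1 R : B R) - (Y2 R : B R)) * ((Y1 R : B R) - (Y2 R : B R)) * (Y1 R : B R) * (Y2 R : B R) * (inY2 T : B R))
            (k2 := C (2%:R * s) * (Y1 R : B R) * (Y1 R : B R) * (Y2 R : B R) * (inY2 T : B R) * ((Y1 R : B R) - (Y2 R : B R)))
            (k3 := C (2%:R * s) * (Y1 R : B R) * (Y1 R : B R) * (Y2 R : B R) * (inY2 T : B R))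
            (k4 := (Y1 R : B R) * (Y1 R : B R) * (Y2 R : B R) * (Y2 R : B R) * (inY2 T : B R))
            (k5 := - ((Y1 R : B R) * (Y1 R : B R) * (Y2 R : B R) * (Y2 R : B R) * (inY2 T : B R)))
            (k6 := (Y1 R : B R) * (Y1 R : B R) * (Y2 R : B R) * (Y2 R : B R) * (inY2 T : B R) * ((Y2 R : B R) - (Y1 R : B R)))
            (k7 := (Y1 R : B R) * (Y1 R : B R) * (Y2 R : B R) * (Y2 R : B R) * ((Y1 R : B R) - (Y2 R : B R)))
            (k8 := (Y1 R : B R) * (Y1 R : B R) * (Y2 R : B R) * (Y2 R : B R)) e2 e3 e4 k1 k2 e5 e6 e7).
ring.
Qed.
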